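(* Let $G$ be a uniformly dense graph with at least one edge and maximum degree $\Delta(G)$. Then $G$ is $(\rho(G)/\Delta(G))$-tough. If, furthermore, $G$ is regular and connected, then $G$ is $1$-tough.
   Context: Graphs are finite and simple (no loops, no multiple edges). The cycle matroid $M(G)$ has ground set $E$ and bases the spanning trees (maximal acyclic edge subsets). For $A\subseteq E$, $c(A)$ is the number of connected components of the graph $(V,A)$, and $\operatorname{rank}(A)=|V|-c(A)$. The density of $G$ is $\rho(G)=|E|/\operatorname{rank}(E)$. $G$ is uniformly dense if $|A|/\operatorname{rank}(A)\le\rho(G)$ for every nonempty $A\subseteq E$. A graph is $t$-tough if for every set $U$ of $k$ vertices, removing $U$ (and its incident edges) increases the number of connected components by at most $k/t$; the complete graph is considered $t$-tough for every $t$. *)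

(* Defs.v *)
(* A finite simple graph is a symmetric irreflexive relation
   e : rel T on a finite vertex type T. *)
From HB Require Import structures.
From mathcomp Require Import all_boot all_order all_algebra.
Set Implicit Arguments. Unset Strict Implicit. Unset Printing Implicit Defensive.
Import Order.TTheory GRing.Theory Num.Theory.

Section Graphs.
Variable T : finType.

Definition ncomp (V : {set T}) (r : rel T) : nat :=
  let rV := [rel x y | [&& x \in V, y \in V & r x y]] in
  #|[set [set y in V | connect rV x y] | x in V]|.

Definition edges (e : rel T) : {set {set T}} :=
  [set [set x; y] | x in T, y in T & e x y].

Definition comps (A : {set {set T}}) : nat :=
  ncomp [set: T] (fun x y => [set x; y] \in A).

(* rank(A) = |V| - c(A) in the cycle matroid *)
Definition mrank (A : {set {set T}}) : nat := #|T| - comps A.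

Definition density (e : rel T) : rat :=
  (#|edges e|%:R / (mrank (edges e))%:R)%R.

Definition uniformly_dense (e : rel T) : Prop :=
  forall A : {set {set T}}, A \subset edges e -> A != set0 ->
    (#|A|%:R / (mrank A)%:R <= density e)%R.

Definition degree (e : rel T) (v : T) : nat := #|[set w | e v w]|.

Definition max_degree (e : rel T) : nat := \max_(v : T) degree e v.

Definition regular (e : rel T) : Prop :=
  forall v w : T, degree e v = degree e w.

Definition comps_minus (e : rel T) (U : {set T}) : nat := ncomp (~: U) e.

Definition connected_graph (e : rel T) : Prop := ncomp [set: T] e = 1%N.

Definition tough (e : rel T) (t : rat) : Prop :=
  forall U : {set T},
    ((comps_minus e U)%:R - (ncomp [set: T] e)%:R <= #|U|%:R / t)%R.

End Graphs.

(* Main.v *)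
Require Import Defs.
From HB Require Import structures.
From mathcomp Require Import all_boot all_order all_algebra ring lra.
Import Order.TTheory GRing.Theory Num.Theory.
Set Implicit Arguments. Unset Strict Implicit. Unset Printing Implicit Defensive.

Lemma card_sumb (X : finType) (A : {pred X}) : #|A| = \sum_x (x \in A).
Proof. by rewrite -sum1_card big_mkcond /=; apply: eq_bigr => x _; case: (x \in A). Qed.

Lemma ncomp_eq (X : finType) (V : {set X}) (r1 r2 : rel X) :
  r1 =2 r2 -> ncomp V r1 = ncomp V r2.
Proof.
move=> H; rewrite /ncomp /=; apply: eq_card => C; apply/imsetP/imsetP => -[x xV ->]; exists x => //; apply/setP => y.
all: rewrite !inE; congr (_ && _); apply: eq_connect => a b /=; by rewrite H.
Qed.

Lemma ncomp_le (X : finType) (V : {set X}) (r : rel X) : ncomp V r <= #|V|.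
Proof. exact: leq_imset_card. Qed.

Section G.
Variable T : finType.
Variable e : rel T.
Hypothesis e_sym : symmetric e.
Hypothesis e_irr : irreflexive e.

Lemma mem_edges x y : ([set x; y] \in edges e) = e x y.
Proof.
apply/idP/idP; last by move=> h; apply/imset2P; exists x y; rewrite ?inE.
case/imset2P => a b _; rewrite inE => eab E.
have ha : a \in [set x; y] by rewrite E !inE eqxx.
have hb : b \in [set x; y] by rewrite E !inE eqxx orbT.
have hx : x \in [set a; b] by rewrite -E !inE eqxx.
have hy : y \in [set a; b] by rewrite -E !inE eqxx orbT.
move: ha hb hx hy; rewrite !inE.
case/orP=> /eqP ?; case/orP=> /eqP ?; subst => //.
- by rewrite e_irr in eab.
- by rewrite e_sym.
- by rewrite e_irr in eab.
Qed.

Lemma edgeP S : S \in edges e -> exists x y, S = [set x; y] /\ e x y.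
Proof. by case/imset2P => a b _; rewrite inE => eab ->; exists a, b. Qed.

Lemma comps_edges : comps (edges e) = ncomp [set: T] e.
Proof. by apply: ncomp_eq => x y; rewrite mem_edges. Qed.

Lemma comps_le (A : {set {set T}}) : comps A <= #|T|.
Proof. by rewrite /comps (leq_trans (ncomp_le _ _)) // cardsT. Qed.

Lemma comps_lt (A : {set {set T}}) : A \subset edges e -> A != set0 -> comps A < #|T|.
Proof.
move=> sAE /set0Pn [S SA]; have [x [y [SE exy]]] := edgeP (subsetP sAE _ SA).
have xy : x != y by apply: contraTneq exy => ->; rewrite e_irr.
set r := [rel a b | [&& a \in [set: T], b \in [set: T] & [set a; b] \in A]].
have rsym : symmetric r by move=> a b; rewrite /= !inE setUC.
have cxy : connect r x y by apply: connect1; rewrite /= !inE -SE.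
set f := fun z => [set w in [set: T] | connect r z w].
have fxy : f x = f y.
  apply/setP => w; rewrite !inE; apply/idP/idP => h.
  - by apply: connect_trans h; rewrite (sym_connect_sym rsym).
  - exact: connect_trans cxy h.
rewrite /comps /ncomp -/r -/f.
have sub : [set f z | z in [set: T]] \subset [set f z | z in [set: T] :\ y].
  apply/subsetP => C /imsetP [z _ ->].
  case: (eqVneq z y) => [->|zy]; first by rewrite -fxy; apply: imset_f; rewrite !inE xy.
  by apply: imset_f; rewrite !inE zy.
apply: (leq_ltn_trans (subset_leq_card sub)); apply: (leq_ltn_trans (leq_imset_card _ _)).
by rewrite -cardsT (cardsD1 y [set: T]) inE.
Qed.

Definition Ain (U : {set T}) := [set S in edges e | S \subset ~:U].

Lemma Ain_sub U : Ain U \subset edges e.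
Proof. by apply/subsetP => S; rewrite inE => /andP []. Qed.

Lemma compsA U : comps (Ain U) = comps_minus e U + #|U|.
Proof.
set R := [rel x y | [&& x \in ~:U, y \in ~:U & e x y]].
have eR : forall x y, ([set x; y] \in Ain U) = R x y.
  by move=> x y; rewrite /Ain inE mem_edges subUset !sub1set /= andbC andbA.
have -> : comps (Ain U) = #|[set [set y in [set: T] | connect R x y] | x in [set: T]]|.
  rewrite /comps /ncomp /=; apply: eq_card => C.
  apply/imsetP/imsetP => -[x xV ->]; exists x => //; apply/setP => y;
    rewrite !inE; apply: eq_connect => a b /=; by rewrite !in_setT /= eR.
have cl : forall x y, connect R x y -> x \in ~:U -> y \in ~:U.
  move=> x y /connectP [p]; case/lastP: p => [|p z]; first by move=> _ ->.
  by rewrite rcons_path last_rcons => /andP [_ /and3P [_ ? _]] ->.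
have cU : forall x y, connect R x y -> x \in U -> y = x.
  move=> x y /connectP [[|z p]]; first by move=> _ ->.
  by rewrite /= inE => /andP [/and3P [/negP ? _ _] _].
rewrite /comps_minus /ncomp /= -{2}(setUCr U) imsetU cardsU setIC addnC.
have -> : [set [set y in [set: T] | connect R x y] | x in ~: U] =
          [set [set y in ~: U | connect R x y] | x in ~: U].
  apply: eq_in_imset => x xU; apply/setP => y; rewrite !inE.
  apply/idP/idP => [/= h|/andP [_ h] //]; first by rewrite h andbT; move: (cl _ _ h xU); rewrite inE.
have -> : [set [set y in [set: T] | connect R x y] | x in U] = [set [set x] | x in U].
  apply: eq_in_imset => x xU; apply/setP => y; rewrite !inE.
  apply/idP/idP => [/cU -> //| /eqP ->]; by rewrite connect0.
have -> : [set [set y in ~: U | connect R x y] | x in ~: U] :&: [set [set x] | x in U] = set0.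
  apply/setP => C; rewrite !inE; apply/negP => /andP [/imsetP [x xU ->] /imsetP [u uU E]].
  have : x \in [set y in ~: U | connect R x y] by rewrite inE xU connect0.
  by rewrite E inE => /eqP xu; move: xU; rewrite inE xu uU.
rewrite cards0 subn0 [#|[set [set x] | x in U]|]card_in_imset //; move=> a b _ _; exact: set1_inj.
Qed.

Lemma card_sep (X : finType) (D : {set X}) (P : pred X) :
  #|[set x in D | P x]| = \sum_(x in D) P x.
Proof.
rewrite card_sumb [RHS]big_mkcond /=; apply: eq_bigr => x _; rewrite inE.
by case: (x \in D).
Qed.

Definition star v := [set S in edges e | v \in S].

Lemma star_le v : #|star v| <= degree e v.
Proof.
rewrite /degree -(card_in_imset (f := fun w => [set v; w])); last first.
  move=> w1 w2; rewrite !inE => h1 _ E.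
  have : w1 \in [set v; w2] by rewrite -E !inE eqxx orbT.
  rewrite !inE => /orP [/eqP E1|/eqP //]; by rewrite E1 e_irr in h1.
apply: subset_leq_card; apply/subsetP => S; rewrite inE => /andP [SE vS].
have [x [y [SE' exy]]] := edgeP SE; move: vS; rewrite SE' !inE => /orP [] /eqP ->.
  by apply: imset_f; rewrite inE.
by rewrite setUC; apply: imset_f; rewrite inE e_sym.
Qed.

Lemma deg_le_star v : degree e v <= #|star v|.
Proof.
rewrite /degree -(card_in_imset (f := fun w => [set v; w])); last first.
  move=> w1 w2; rewrite !inE => h1 _ E.
  have : w1 \in [set v; w2] by rewrite -E !inE eqxx orbT.
  rewrite !inE => /orP [/eqP E1|/eqP //]; by rewrite E1 e_irr in h1.
apply: subset_leq_card; apply/subsetP => S /imsetP [w]; rewrite inE => ew ->.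
by rewrite inE mem_edges ew !inE eqxx.
Qed.

Lemma EA_le U : #|edges e :\: Ain U| <= \sum_(u in U) degree e u.
Proof.
apply: (@leq_trans (\sum_(S in edges e :\: Ain U) \sum_(u in U) (u \in S))).
  rewrite -sum1_card; apply: leq_sum => S; rewrite !inE negb_and => /andP [/orP [h|h] SE].
    by rewrite SE in h.
  case/subsetPn: h => u uS uU.
  by rewrite -card_sep card_gt0; apply/set0Pn; exists u; rewrite inE uS andbT; rewrite inE negbK in uU.
rewrite exchange_big /=; apply: leq_sum => u uU.
rewrite -card_sep; apply: leq_trans (star_le u); apply: subset_leq_card.
by apply/subsetP => S; rewrite !inE => /andP [/andP [_ ->] ->].
Qed.

Lemma handshake : \sum_v degree e v <= #|edges e| * 2.
Proof.
apply: (@leq_trans (\sum_v #|star v|)); first by apply: leq_sum => v _; exact: deg_le_star.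
rewrite -sum_nat_const.
have -> : \sum_v #|star v| = \sum_v \sum_(S in edges e) (v \in S).
  by apply: eq_bigr => v _; rewrite /star card_sep.
rewrite exchange_big /=; apply: leq_sum => S SE.
rewrite -card_sumb; have [x [y [-> _]]] := edgeP SE; by rewrite cards2; case: (x != y).
Qed.

Hypothesis hE : edges e != set0.
Hypothesis hud : uniformly_dense e.

Lemma c_lt : ncomp [set: T] e < #|T|.
Proof. by rewrite -comps_edges comps_lt. Qed.

Lemma rho_eq : (#|edges e|%:R = density e * (#|T|%:R - (ncomp [set: T] e)%:R) :> rat)%R.
Proof.
rewrite /density /mrank comps_edges -natrB; last exact: ltnW c_lt.
by rewrite divfK // pnatr_eq0 -lt0n subn_gt0 c_lt.
Qed.

Lemma rho_gt0 : (0 < density e)%R.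
Proof.
rewrite /density divr_gt0 // ltr0n ?card_gt0 //.
by rewrite /mrank comps_edges subn_gt0 c_lt.
Qed.

Lemma key U : (density e * ((comps_minus e U)%:R - (ncomp [set: T] e)%:R) <=
   #|U|%:R * (max_degree e)%:R - #|U|%:R * density e :> rat)%R.
Proof.
have hck : comps_minus e U + #|U| <= #|T| by rewrite -compsA comps_le.
have hm : #|edges e| <= #|Ain U| + #|U| * max_degree e.
  rewrite -(cardsID (Ain U) (edges e)) (setIidPr (Ain_sub U)) leq_add2l.
  apply: leq_trans (EA_le U) _; rewrite -sum_nat_const; apply: leq_sum => u _.
  exact: leq_bigmax.
have ha : (#|Ain U|%:R <= density e * (#|T|%:R - (comps_minus e U)%:R - #|U|%:R) :> rat)%R.
  have -> : ((#|T|%:R - (comps_minus e U)%:R - #|U|%:R : rat) = (mrank (Ain U))%:R)%R.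
    by rewrite /mrank compsA natrB // natrD opprD addrA.
  case: (eqVneq (Ain U) set0) => [->|ne].
    by rewrite cards0 mulr_ge0 // ltW // rho_gt0.
  have := hud (Ain_sub U) ne; rewrite ler_pdivrMr //.
  by rewrite ltr0n /mrank subn_gt0 comps_lt // Ain_sub.
have h1 := rho_eq.
have hm' : (#|edges e|%:R <= #|Ain U|%:R + #|U|%:R * (max_degree e)%:R :> rat)%R.
  by rewrite -natrM -natrD ler_nat.
set r := density e in h1 ha *.
rewrite -> h1 in hm'.
have : (r * (#|T|%:R - (ncomp [set: T] e)%:R) <= r * (#|T|%:R - (comps_minus e U)%:R - #|U|%:R) + #|U|%:R * (max_degree e)%:R :> rat)%R.
  exact: le_trans hm' (lerD ha (lexx _)).
move=> h. lra.
Qed.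

Lemma D_gt0 : 0 < max_degree e.
Proof.
case/set0Pn: hE => S /edgeP [x [y [_ exy]]].
apply: leq_trans (leq_bigmax x); rewrite /degree card_gt0; apply/set0Pn; exists y; by rewrite inE.
Qed.

Lemma part1 : tough e (density e / (max_degree e)%:R)%R.
Proof.
move=> U; rewrite invf_div mulrA ler_pdivlMr ?rho_gt0 //.
have := key U; have : (0 <= #|U|%:R * density e :> rat)%R by rewrite mulr_ge0 // ltW // rho_gt0.
move=> h1 h2; lra.
Qed.

Lemma part2 : regular e -> tough e 1%R.
Proof.
move=> reg U; rewrite divr1.
have hn : max_degree e * #|T| <= #|edges e| * 2.
  apply: leq_trans handshake; rewrite mulnC -sum_nat_const; apply: leq_sum => v _.
  by apply/bigmax_leqP => w _; rewrite (reg w v).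
have hn' : ((max_degree e)%:R * #|T|%:R <= #|edges e|%:R * 2 :> rat)%R.
  by rewrite -natrM -(natrM _ _ 2) ler_nat.
have hpos : (0 < #|T|%:R - (ncomp [set: T] e)%:R :> rat)%R by rewrite subr_gt0 ltr_nat c_lt.
have hc0 : (0 <= (ncomp [set: T] e)%:R :> rat)%R by [].
have hD : ((max_degree e)%:R <= 2 * density e :> rat)%R.
  rewrite -(ler_pM2r hpos).
  have h1 := rho_eq; have hD0 : (0 <= (max_degree e)%:R :> rat)%R by [].
  have : ((max_degree e)%:R * (ncomp [set: T] e)%:R >= 0 :> rat)%R by rewrite mulr_ge0.
  move=> h2; rewrite mulrBr -mulrA -h1; lra.
have hk : (#|U|%:R * (max_degree e)%:R <= #|U|%:R * (2 * density e) :> rat)%R.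
  by rewrite ler_wpM2l.
have := key U => h.
have : (density e * ((comps_minus e U)%:R - (ncomp [set: T] e)%:R) <= density e * #|U|%:R :> rat)%R by lra.
by rewrite ler_pM2l ?rho_gt0.
Qed.
End G.

Unset Implicit Arguments.

Theorem theorem3p13 (T : finType) (e : rel T)
  (e_sym : symmetric e) (e_irr : irreflexive e)
  (hE : edges e != set0) (hud : uniformly_dense e) :
  tough e (density e / (max_degree e)%:R)%R /\
  (regular e -> connected_graph e -> tough e 1%R).
Proof.
split; first exact: part1.
by move=> reg _; apply: part2.
Qed.
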